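(* If $\rho$ is a function quasi-norm over a $\sigma$-finite measure space $(\Omega,\Sigma,\mu)$ with the weak Fatou property, then $\rho$ has the rough Fatou property.
   Context: $L_0^+(\mu)$: measurable functions $\Omega\to[0,\infty]$ modulo a.e. equality. A function quasi-norm is $\rho\colon L_0^+(\mu)\to[0,\infty]$ with (F1) $\rho(tf)=t\rho(f)$, $t\ge0$; (F2) $f\le g$ a.e. $\Rightarrow\rho(f)\le\rho(g)$; (F3) $\rho(\chi_E)<\infty$ if $\mu(E)<\infty$; (F4) for all $E$ with $\mu(E)<\infty$ and $\varepsilon>0$ there is $\delta>0$ with $\mu(A)\le\varepsilon$ whenever $A\subseteq E$ is measurable with $\rho(\chi_A)\le\delta$; (F5) $\rho(f+g)\le\kappa(\rho(f)+\rho(g))$ for a constant $\kappa$. $\rho$ has the rough Fatou property if there is a constant $C$ with $\rho(\lim_nf_n)\le C\lim_n\rho(f_n)$ for every non-decreasing sequence $(f_n)$ in $L_0^+(\mu)$; it has the weak Fatou property if $\rho(\lim_nf_n)<\infty$ whenever $(f_n)$ is non-decreasing in $L_0^+(\mu)$ with $\lim_n\rho(f_n)<\infty$. *)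

(* Defs.v *)
From HB Require Import structures.
From mathcomp Require Import all_boot all_order all_algebra.
From mathcomp Require Import all_classical all_reals all_analysis measurable_realfun.
Set Implicit Arguments. Unset Strict Implicit. Unset Printing Implicit Defensive.
Import Order.TTheory GRing.Theory Num.Theory.
Local Open Scope classical_set_scope.
Local Open Scope ring_scope.
Local Open Scope ereal_scope.

(* Quotienting by a.e. equality is encoded by requiring rho to be
   monotone w.r.t. the a.e. order (axiom F2), which forces rho to be
   invariant under a.e. equality. *)
Definition L0p d (T : measurableType d) (R : realType) (f : T -> \bar R) : Prop :=
  measurable_fun [set: T] f /\ (forall x, 0 <= f x).

Definition indic_e d (T : measurableType d) (R : realType) (E : set T) : T -> \bar R :=
  fun x => (\1_E x)%:E.

Definition function_quasi_norm d (T : measurableType d) (R : realType)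
    (mu : {measure set T -> \bar R}) (rho : (T -> \bar R) -> \bar R) : Prop :=
  (forall f, L0p f -> 0 <= rho f) /\
  (forall (t : R) f, (0 <= t)%R -> L0p f ->
     rho (fun x => t%:E * f x) = t%:E * rho f) /\
  (forall f g, L0p f -> L0p g -> {ae mu, forall x, f x <= g x} -> rho f <= rho g) /\
  (forall E, measurable E -> mu E < +oo -> rho (indic_e R E) < +oo) /\
  (forall E (eps : R), measurable E -> mu E < +oo -> (0 < eps)%R ->
     exists2 delta : R, (0 < delta)%R &
       forall A, measurable A -> A `<=` E -> rho (indic_e R A) <= delta%:E ->
         mu A <= eps%:E) /\
  (exists kappa : R, forall f g, L0p f -> L0p g ->
     rho (fun x => f x + g x) <= kappa%:E * (rho f + rho g)).

Definition L0p_nondecr d (T : measurableType d) (R : realType)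
    (mu : {measure set T -> \bar R}) (f : nat -> T -> \bar R) : Prop :=
  (forall n, L0p (f n)) /\ (forall n, {ae mu, forall x, f n x <= f n.+1 x}).

(* Its limit in L_0^+(mu): the pointwise supremum (a.e. equal to the
   pointwise limit). *)
Definition seq_lim d (T : measurableType d) (R : realType)
    (f : nat -> T -> \bar R) : T -> \bar R :=
  fun x => ereal_sup (range (fun n => f n x)).

Definition rough_Fatou d (T : measurableType d) (R : realType)
    (mu : {measure set T -> \bar R}) (rho : (T -> \bar R) -> \bar R) : Prop :=
  exists2 C : R, (0 < C)%R &
    forall f, L0p_nondecr mu f ->
      rho (seq_lim f) <= C%:E * limn (fun n => rho (f n)).

Definition weak_Fatou d (T : measurableType d) (R : realType)
    (mu : {measure set T -> \bar R}) (rho : (T -> \bar R) -> \bar R) : Prop :=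
  forall f, L0p_nondecr mu f ->
    limn (fun n => rho (f n)) < +oo -> rho (seq_lim f) < +oo.

(* Main.v *)
Set Warnings "-all".
Require Import Defs.
From mathcomp Require Import all_boot all_order all_algebra.
From mathcomp Require Import all_classical all_reals all_analysis measurable_realfun.
From mathcomp Require Import ring lra.
Import Order.TTheory GRing.Theory Num.Theory.
Local Open Scope classical_set_scope.
Local Open Scope ring_scope.
Local Open Scope ereal_scope.

Lemma seq_lim_meas d (T : measurableType d) (R : realType) (f : nat -> T -> \bar R) :
  (forall n, measurable_fun setT (f n)) -> measurable_fun setT (seq_lim f).
Proof.
move=> Hf.
rewrite (_ : seq_lim f = fun x => esups (f^~ x) 0%N).
  exact: measurable_fun_esups.
apply/funext => x; rewrite /esups /sdrop /seq_lim /=.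
congr ereal_sup; apply/seteqP; split => y [k _ <-]; by exists k.
Qed.

Lemma sum_bound d (T : measurableType d) (R : realType)
  (rho : (T -> \bar R) -> \bar R) (k : R) :
  (1 <= k)%R ->
  rho (fun _ => 0) = 0 ->
  (forall f g, L0p f -> L0p g -> rho (fun x => f x + g x) <= k%:E * (rho f + rho g)) ->
  (forall f, L0p f -> 0 <= rho f) ->
  forall N (r : R) (a : nat -> T -> \bar R), (0 <= r)%R -> (forall n, L0p (a n)) ->
  (forall n, rho (a n) <= (r / (2 * k) ^+ n)%:E) ->
  rho (fun x => \sum_(0 <= n < N) a n x) <= (2 * k * r)%:E.
Proof.
move=> k1 Z F5 R0; elim=> [|N IH] r a r0 La Ba.
  under eq_fun do rewrite big_geq //.
  by rewrite Z lee_fin; apply: mulr_ge0 => //; lra.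
under eq_fun do rewrite big_nat_recl //.
have Ls : L0p (fun x => \sum_(0 <= i < N) a i.+1 x).
  split; first by apply: emeasurable_sum => n; exact: (La n.+1).1.
  by move=> x; apply: sume_ge0 => n _; exact: (La n.+1).2.
apply: le_trans (F5 _ _ (La 0%N) Ls) _.
have k0 : (0 < 2 * k)%R by lra.
have := IH (r / (2 * k))%R (fun n => a n.+1).
have r2 : (0 <= r / (2 * k))%R by apply: divr_ge0 => //; lra.
move=> /(_ r2 (fun n => La n.+1)) H.
have {H} : rho (fun x => \sum_(0 <= i < N) a i.+1 x) <= r%:E.
  rewrite (_ : r = 2 * k * (r / (2 * k)))%R; last first.
    by rewrite mulrCA mulfV ?mulr1 // gt_eqF.
  apply: H => n; apply: le_trans (Ba n.+1) _.
  by rewrite lee_fin exprS invfM mulrA.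
move=> H; apply: le_trans (_ : k%:E * (r%:E + r%:E) <= _).
  apply: lee_wpmul2l; first by rewrite lee_fin; lra.
  apply: leeD => //; apply: le_trans (Ba 0%N) _.
  by rewrite expr0 divr1.
by rewrite -EFinD -EFinM lee_fin (_ : k * (r + r) = 2 * k * r)%R //; ring.
Qed.

Theorem proposition3p15 (d : measure_display) (T : measurableType d) (R : realType)
    (mu : {measure set T -> \bar R}) (rho : (T -> \bar R) -> \bar R) :
  sigma_finite setT mu ->
  function_quasi_norm mu rho ->
  weak_Fatou mu rho ->
  rough_Fatou mu rho.
Proof.
move=> _ [R0 [F1 [F2 [_ [_ [k0 F5]]]]]] WF.
pose k := Num.max k0 1%R.
have k1 : (1 <= k)%R by rewrite le_max lexx orbT.
have F5' : forall f g, L0p f -> L0p g ->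
    rho (fun x => f x + g x) <= k%:E * (rho f + rho g).
  move=> f g Lf Lg; apply: le_trans (F5 f g Lf Lg) _.
  apply: lee_wpmul2r; first by apply: adde_ge0; apply: R0.
  by rewrite lee_fin le_max lexx.
have L00 : L0p (fun _ : T => (0 : \bar R)).
  by split => //; exact: measurable_cst.
have Z : rho (fun _ => 0) = 0.
  have H := F1 0%R (fun _ => 0) (lexx _) L00.
  by rewrite !mul0e in H.
have SL : forall f : nat -> T -> \bar R, (forall n, L0p (f n)) -> L0p (seq_lim f).
  move=> f Lf; split; first by apply: seq_lim_meas => n; exact: (Lf n).1.
  move=> x; apply: le_trans ((Lf 0%N).2 x) _.
  by apply: ereal_sup_ubound; exists 0%N.
have ND : forall f, L0p_nondecr mu f ->
    limn (fun n => rho (f n)) = ereal_sup (range (fun n => rho (f n))).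
  move=> f [Lf Hf]; apply/cvg_lim => //.
  apply: ereal_nondecreasing_cvgn; apply/nondecreasing_seqP => n.
  exact: F2.
have Scale : forall f (c : R), L0p_nondecr mu f -> (0 < c)%R ->
    L0p_nondecr mu (fun j x => c%:E * f j x) /\
    (forall j, rho (fun x => c%:E * f j x) = c%:E * rho (f j)) /\
    rho (seq_lim (fun j x => c%:E * f j x)) = c%:E * rho (seq_lim f).
  move=> f c [Lf Hf] c0.
  have Lg : forall j, L0p (fun x => c%:E * f j x).
    move=> j; split.
      by apply: (emeasurable_funM (measurable_cst _)); exact: (Lf j).1.
    by move=> x; apply: mule_ge0; [rewrite lee_fin ltW | exact: (Lf j).2].
  split; first split => // j.
    apply: filterS (Hf j) => x Hx.
    by apply: lee_wpmul2l => //; rewrite lee_fin ltW.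
  split; first by move=> j; exact: F1 (ltW c0) (Lf j).
  rewrite -F1 ?(ltW c0) //; last exact: SL.
  congr rho; apply/funext => x.
  by rewrite /seq_lim -ereal_sup_pZl // image_comp.
apply: contrapT => nRF.
have Norm : forall n : nat, exists f, L0p_nondecr mu f /\
    (forall j, rho (f j) <= (1 / (2 * k) ^+ n)%:E) /\
    (n%:R)%:E <= rho (seq_lim f).
  move=> n.
  pose P := ((2 * k) ^+ n)%R.
  have P0 : (0 < P)%R by apply: exprn_gt0; lra.
  pose C := (n.+1%:R * P)%R.
  have C0 : (0 < C)%R by apply: mulr_gt0.
  have : ~ (forall f, L0p_nondecr mu f ->
      rho (seq_lim f) <= C%:E * limn (fun n => rho (f n))).
    by move=> H; apply: nRF; exists C.
  move=> /existsNP [f /not_implyP [Lf /negP]]; rewrite -ltNge => Hlt.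
  rewrite (ND f Lf) in Hlt.
  have Lj : forall j, rho (f j) <= ereal_sup (range (fun n => rho (f n))).
    by move=> j; apply: ereal_sup_ubound; exists j.
  have L0 : 0 <= ereal_sup (range (fun n => rho (f n))).
    by apply: le_trans (Lj 0%N); apply: R0; exact: Lf.1.
  have s0 : 0 <= rho (seq_lim f) by apply: R0; apply: SL; exact: Lf.1.
  move: Lj L0 Hlt; case: (ereal_sup _) => [l| |] Lj L0 Hlt; last by [].
    rewrite lee_fin in L0.
    case Es : (rho (seq_lim f)) => [s| |] in s0 Hlt *; last by [].
      rewrite -EFinM lte_fin in Hlt.
      have sp : (0 < s)%R by apply: le_lt_trans Hlt; apply: mulr_ge0 => //; exact: ltW.
      pose c := (n.+1%:R / s)%R.
      have c0 : (0 < c)%R by apply: divr_gt0.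
      have [Lg [Rg Sg]] := Scale f c Lf c0.
      exists (fun j x => c%:E * f j x); split => //; split.
        move=> j; rewrite Rg; apply: le_trans (lee_wpmul2l _ (Lj j)) _.
          by rewrite lee_fin ltW.
        rewrite -EFinM lee_fin /c mulrAC ler_pdivrMr // mul1r.
        rewrite ler_pdivlMl //; apply: ltW; apply: le_lt_trans Hlt.
        by rewrite /C (_ : P * (n.+1%:R * l) = n.+1%:R * P * l)%R //; ring.
      rewrite Sg Es -EFinM lee_fin /c divfK ?gt_eqF // ler_nat.
      exact: leqnSn.
    pose c := (P * (l + 1))^-1%R.
    have c0 : (0 < c)%R by rewrite /c invr_gt0; apply: mulr_gt0 => //; lra.
    have [Lg [Rg Sg]] := Scale f c Lf c0.
    exists (fun j x => c%:E * f j x); split => //; split.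
      move=> j; rewrite Rg; apply: le_trans (lee_wpmul2l _ (Lj j)) _.
        by rewrite lee_fin ltW.
      rewrite -EFinM lee_fin /c mulrC ler_pdivrMr; last by apply: mulr_gt0 => //; lra.
      by rewrite mul1r mulrA mulVf ?gt_eqF // mul1r; lra.
    by rewrite Sg Es gt0_muley ?lte_fin // leey.
  by rewrite gt0_muley ?lte_fin // ltNge leey in Hlt.
have [F HF] := choice Norm.
pose h := fun (q : nat) (x : T) => \sum_(0 <= m < q.+1) F m (q - m)%N x.
have LF : forall m j, L0p (F m j) by move=> m j; exact: (HF m).1.1 j.
have Lh : L0p_nondecr mu h.
  split.
    move=> q; split; first by apply: emeasurable_sum => m; exact: (LF _ _).1.
    by move=> x; apply: sume_ge0 => m _; exact: (LF _ _).2.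
  have Hae : \forall x \ae mu, forall m j, F m j x <= F m j.+1 x.
    apply: ae_foralln => m; apply: ae_foralln => j.
    exact: (HF m).1.2 j.
  move=> q; apply: filterS Hae => x Hx.
  rewrite /h [X in _ <= X]big_nat_recr //=.
  apply: le_trans (leeDl _ _); last exact: (LF _ _).2.
  rewrite big_nat_cond [X in _ <= X]big_nat_cond.
  apply: lee_sum => m /andP[/andP[_ mq] _].
  by rewrite subSn //; exact: Hx.
have Bh : forall q, rho (h q) <= (2 * k * 1)%:E.
  move=> q; apply: (@sum_bound d T R rho k k1 Z F5' R0 q.+1 1%R (fun m => F m (q - m)%N)) => //.
  by move=> m; exact: (HF m).2.1.
have Hfin : limn (fun n => rho (h n)) < +oo.
  rewrite (ND h Lh); apply: (@le_lt_trans _ _ (2 * k * 1)%:E); last exact: ltey.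
  by apply: ge_ereal_sup => _ [q _ <-]; exact: Bh.
have := WF h Lh Hfin.
have Sh0 : 0 <= rho (seq_lim h) by apply: R0; apply: SL; exact: Lh.1.
rewrite -ge0_fin_numE // => /fineK Eb.
pose b := fine (rho (seq_lim h)).
have b0 : (0 <= b)%R by rewrite /b fine_ge0.
pose n := Num.Def.archi_bound b.
have bn := archi_boundP b0.
have Hle : rho (seq_lim (F n)) <= rho (seq_lim h).
  apply: F2; [apply: SL; exact: LF | apply: SL; exact: Lh.1 |].
  apply: aeW => x; apply: ge_ereal_sup => _ [j _ <-].
  apply: le_trans (ereal_sup_ubound _); last by exists (n + j)%N.
  rewrite /h (bigD1_seq n) ?iota_uniq //=.
    rewrite addKn; apply: leeDl; apply: sume_ge0 => m _; exact: (LF _ _).2.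
  by rewrite mem_index_iota /= ltnS leq_addr.
have := le_trans (HF n).2.2 Hle.
by rewrite -Eb lee_fin -/b leNgt bn.
Qed.
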